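(* Let $Q=(G\leftleftarrows A)$ be a group-like graph which is path-connected (as an undirected graph). Then $\phi(I^n(A))=I^{n+1}(G)$ for all $n\ge 0$, where $\phi:\mathbf k[A]\to\mathbf k[G]$ is $\phi(a)=t(a)-s(a)$.
   Context: A group-like graph is a directed graph $(G\overset{s}{\underset{t}{\leftleftarrows}}A)$ with an associative multiplication morphism from its Cartesian square to itself making $G$ a group; it gives a two-sided action of $G$ on $A$ with $s,t$ equivariant ($s(g\cdot a\cdot h)=gs(a)h$, similarly for $t$). $\mathbf k$ is a field of characteristic $0$, $\mathbf k[G]$ the group algebra, $\mathbf k[A]$ the vector space with basis $A$ with the induced $\mathbf k[G]$-bimodule structure. $I(G)$ is the augmentation ideal of $\mathbf k[G]$, $I^0(G)=\mathbf k[G]$, and $I^n(A)\subseteq\mathbf k[A]$ is the span of all $v_1\cdot a\cdot v_2$ with $a\in A$, $v_1\in I^k(G)$, $v_2\in I^{n-k}(G)$, $0\le k\le n$. *)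

(* Defs.v *)
From HB Require Import structures.
From Stdlib Require Import Relation_Operators.
From mathcomp Require Import all_boot all_order all_algebra.
From mathcomp Require Import monoid.
From mathcomp Require Import finmap.
From mathcomp.multinomials Require Import monalg.

Set Implicit Arguments.
Unset Strict Implicit.
Unset Printing Implicit Defensive.

Import GRing.Theory.
Local Open Scope ring_scope.

(* The multiplication morphism from the
   (graph-theoretic) Cartesian square Q x Q -> Q amounts, on vertices, to
   the group law of G and, on edges (edges of Q x Q are A x G + G x A),
   to a left action  lact : G -> A -> A  and a right action
   ract : A -> G -> A; associativity says these are commuting actions and
   being a morphism says s and t are equivariant.                        *)
Definition group_like_graph (G : groupType) (A : Type)
    (s t : A -> G) (lact : G -> A -> A) (ract : A -> G -> A) : Prop :=
  (forall a, lact 1%g a = a) /\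
  (forall g h a, lact (g * h)%g a = lact g (lact h a)) /\
  (forall a, ract a 1%g = a) /\
  (forall a g h, ract a (g * h)%g = ract (ract a g) h) /\
  (forall g a h, lact g (ract a h) = ract (lact g a) h) /\
  (forall g a, s (lact g a) = (g * s a)%g /\ t (lact g a) = (g * t a)%g) /\
  (forall a h, s (ract a h) = (s a * h)%g /\ t (ract a h) = (t a * h)%g).

Definition undirected_adj (G : Type) (A : Type) (s t : A -> G) (g h : G) :=
  exists a : A, (s a = g /\ t a = h) \/ (s a = h /\ t a = g).

Definition path_connected (G : Type) (A : Type) (s t : A -> G) : Prop :=
  forall g h : G, clos_refl_trans G (undirected_adj s t) g h.

(* k[X] is the free k-vector space {malg k[X]} with basis << x >>.      *)

Definition gmul (k : fieldType) (G : groupType) (u v : {malg k[G]})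
  : {malg k[G]} :=
  \sum_(g <- msupp u) \sum_(h <- msupp v) << u@_g * v@_h *g (g * h)%g >>.

Definition gone (k : fieldType) (G : groupType) : {malg k[G]} := << 1%g >>.

Definition augm (k : fieldType) (G : groupType) (u : {malg k[G]}) : k :=
  \sum_(g <- msupp u) u@_g.

Definition bimod (k : fieldType) (G : groupType) (A : choiceType)
    (lact : G -> A -> A) (ract : A -> G -> A)
    (v1 : {malg k[G]}) (x : {malg k[A]}) (v2 : {malg k[G]}) : {malg k[A]} :=
  \sum_(g <- msupp v1) \sum_(a <- msupp x) \sum_(h <- msupp v2)
     << v1@_g * x@_a * v2@_h *g ract (lact g a) h >>.

Definition span (R : ringType) (V : lmodType R) (P : V -> Prop) (w : V) :=
  exists r : seq (R * V), (forall p, p \in r -> P p.2) /\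
                          w = \sum_(p <- r) p.1 *: p.2.

Definition augI (k : fieldType) (G : groupType) (u : {malg k[G]}) : Prop :=
  augm u = 0.

Fixpoint Ipow (k : fieldType) (G : groupType) (n : nat) : {malg k[G]} -> Prop :=
  match n with
  | 0 => fun _ => True
  | n'.+1 => span (fun w => exists u v, Ipow n' u /\ augI v /\ w = gmul u v)
  end.

Definition IpowA (k : fieldType) (G : groupType) (A : choiceType)
    (lact : G -> A -> A) (ract : A -> G -> A) (n : nat) : {malg k[A]} -> Prop :=
  span (fun x => exists (a : A) (v1 v2 : {malg k[G]}) (j : nat),
          [/\ (j <= n)%N, Ipow j v1, Ipow (n - j) v2 &
              x = bimod lact ract v1 << a >> v2]).

Definition phi (k : fieldType) (G : groupType) (A : choiceType)
    (s t : A -> G) (x : {malg k[A]}) : {malg k[G]} :=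
  \sum_(a <- msupp x) x@_a *: (<< t a >> - << s a >>).

(* Main.v *)
Require Import Defs.
From HB Require Import structures.
From Stdlib Require Import Relation_Operators.
From mathcomp Require Import all_boot all_order all_algebra.
From mathcomp Require Import monoid.
From mathcomp Require Import finmap.
From mathcomp.multinomials Require Import monalg.

Set Implicit Arguments.
Unset Strict Implicit.
Unset Printing Implicit Defensive.
Import GRing.Theory.
Local Open Scope ring_scope.

Section Gen.
Variable k : fieldType.

Definition ext (K : choiceType) (V : lmodType k) (F : K -> V) (x : {malg k[K]}) : V :=
  \sum_(a <- msupp x) x@_a *: F a.

Definition lin (V W : lmodType k) (L : V -> W) :=
  forall c x y, L (c *: x + y) = c *: L x + L y.

Definition subsp (V : lmodType k) (Q : V -> Prop) :=
  Q 0 /\ forall c x y, Q x -> Q y -> Q (c *: x + y).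

Lemma lin0 (V W : lmodType k) (L : V -> W) : lin L -> L 0 = 0.
Proof.
move=> hL; have := hL (-1) 0 0; by rewrite scaler0 addr0 scaleN1r addNr.
Qed.

Lemma linD (V W : lmodType k) (L : V -> W) : lin L -> forall x y, L (x + y) = L x + L y.
Proof. by move=> hL x y; have := hL 1 x y; rewrite !scale1r. Qed.

Lemma linZ (V W : lmodType k) (L : V -> W) : lin L -> forall c x, L (c *: x) = c *: L x.
Proof. by move=> hL c x; rewrite -[c *: x]addr0 hL (lin0 hL) addr0. Qed.

Lemma linB (V W : lmodType k) (L : V -> W) : lin L -> forall x y, L (x - y) = L x - L y.
Proof. by move=> hL x y; rewrite linD // -scaleN1r linZ // scaleN1r. Qed.

Lemma lin_sum (V W : lmodType k) (L : V -> W) (I : Type) (r : seq I) (f : I -> V) :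
  lin L -> L (\sum_(i <- r) f i) = \sum_(i <- r) L (f i).
Proof.
move=> hL; elim: r => [|a r IH]; first by rewrite !big_nil (lin0 hL).
by rewrite !big_cons (linD hL) IH.
Qed.

Lemma subsp_sum (V : lmodType k) (Q : V -> Prop) (I : Type) (r : seq I) (f : I -> V) :
  subsp Q -> (forall i, Q (f i)) -> Q (\sum_(i <- r) f i).
Proof.
move=> [h0 hQ] hf; elim: r => [|a r IH]; first by rewrite big_nil.
by rewrite big_cons -[f a]scale1r; apply: hQ.
Qed.

Lemma subspZ (V : lmodType k) (Q : V -> Prop) c x : subsp Q -> Q x -> Q (c *: x).
Proof. by move=> [h0 hQ] hx; rewrite -[_ *: _]addr0; apply: hQ. Qed.

Lemma subsp_preim (V W : lmodType k) (L : V -> W) (Q : W -> Prop) :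
  lin L -> subsp Q -> subsp (fun x => Q (L x)).
Proof.
move=> hL [h0 hQ]; split; first by rewrite (lin0 hL).
by move=> c x y hx hy; rewrite hL; apply: hQ.
Qed.

Lemma ext_incl (K : choiceType) (V : lmodType k) (F : K -> V) (x : {malg k[K]}) d :
  (msupp x `<=` d)%fset -> ext F x = \sum_(a <- d) x@_a *: F a.
Proof.
move=> hd; rewrite /ext (big_fset_incl _ hd) //.
by move=> a _ /mcoeff_outdom ->; rewrite scale0r.
Qed.

Lemma ext_lin (K : choiceType) (V : lmodType k) (F : K -> V) : lin (ext F).
Proof.
move=> c x y.
have h1 : (msupp x `<=` msupp x `|` msupp y)%fset by apply: fsubsetUl.
have h2 : (msupp y `<=` msupp x `|` msupp y)%fset by apply: fsubsetUr.
have h3 : (msupp (c *: x + y) `<=` msupp x `|` msupp y)%fset.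
  apply: fsubset_trans (msuppD_le _ _) _; apply: fsetSU; exact: msuppZ_le.
rewrite (ext_incl _ h1) (ext_incl _ h2) (ext_incl _ h3) scaler_sumr -big_split /=.
by apply: eq_bigr => a _; rewrite mcoeffD mcoeffZ scalerDl scalerA.
Qed.

Lemma malgUZ (K : choiceType) (c : k) (a : K) : << c *g a >> = c *: << a >>.
Proof.
apply/malgP => b; rewrite mcoeffZ !mcoeffU.
by case: eqP => _; rewrite ?mulr1 ?mulr0.
Qed.

Lemma ext_U (K : choiceType) (V : lmodType k) (F : K -> V) c a :
  ext F << c *g a >> = c *: F a.
Proof. by rewrite (ext_incl _ msuppU_le) big_seq_fset1 mcoeffUU. Qed.

Lemma ext_U1 (K : choiceType) (V : lmodType k) (F : K -> V) a :
  ext F << a >> = F a.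
Proof. by rewrite ext_U scale1r. Qed.

Lemma ext_id (K : choiceType) (x : {malg k[K]}) : ext (fun a => << a >>) x = x.
Proof. by rewrite [RHS]monalgE; apply: eq_bigr => a _; rewrite malgUZ. Qed.

Lemma ext_linF (K : choiceType) (V : lmodType k) (F F' : K -> V) c x :
  ext (fun a => c *: F a + F' a) x = c *: ext F x + ext F' x.
Proof.
rewrite /ext scaler_sumr -big_split /=; apply: eq_bigr => a _.
by rewrite scalerDr !scalerA mulrC.
Qed.

Lemma ext_ext (K : choiceType) (V : lmodType k) (F F' : K -> V) x :
  (forall a, F a = F' a) -> ext F x = ext F' x.
Proof. by move=> h; apply: eq_bigr => a _; rewrite h. Qed.

Lemma ext_comp (K : choiceType) (V W : lmodType k) (L : V -> W) (F : K -> V) x :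
  lin L -> L (ext F x) = ext (fun a => L (F a)) x.
Proof. by move=> hL; rewrite /ext lin_sum //; apply: eq_bigr => a _; rewrite (linZ hL). Qed.

Lemma ext_closed (K : choiceType) (V : lmodType k) (Q : V -> Prop) (F : K -> V) x :
  subsp Q -> (forall a, Q (F a)) -> Q (ext F x).
Proof. by move=> hQ hF; apply: subsp_sum => // a; apply: subspZ. Qed.

Lemma ext_const (K : choiceType) (V : lmodType k) (z : V) (x : {malg k[K]}) :
  ext (fun _ => z) x = (\sum_(a <- msupp x) x@_a) *: z.
Proof. by rewrite /ext scaler_suml. Qed.

Lemma span_gen (V : lmodType k) (P : V -> Prop) w : P w -> Defs.span P w.
Proof. by move=> hw; exists [:: (1, w)]; split; [move=> p; rewrite inE => /eqP -> | rewrite big_seq1 scale1r]. Qed.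

Lemma span_sub (V : lmodType k) (P : V -> Prop) : subsp (Defs.span P).
Proof.
split; first by exists [::]; rewrite big_nil.
move=> c x y [r [hr ->]] [r' [hr' ->]].
exists ([seq (c * p.1, p.2) | p <- r] ++ r'); split.
  move=> p; rewrite mem_cat => /orP[/mapP[q hq ->]|]; [exact: (hr _ hq) | exact: hr' ].
rewrite big_cat big_map /= scaler_sumr; congr (_ + _).
by apply: eq_bigr => p _; rewrite scalerA.
Qed.

Lemma span_closed (V : lmodType k) (P Q : V -> Prop) w :
  subsp Q -> (forall z, P z -> Q z) -> Defs.span P w -> Q w.
Proof.
move=> [h0 hQ] hPQ [r [hr ->]]; elim: r hr => [|p r IH] hr; first by rewrite big_nil.
rewrite big_cons; apply: hQ.
  by apply: hPQ; apply: (hr p); rewrite inE eqxx.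
by apply: IH => q hq; apply: hr; rewrite inE hq orbT.
Qed.

Section Grp.
Variable (G : groupType).
Local Notation KG := {malg k[G]}.

Definition gm (g : G) (v : KG) : KG := ext (fun h => << (g * h)%g >>) v.

Lemma gmulE (u v : KG) : gmul u v = ext (fun g => gm g v) u.
Proof.
rewrite /gmul /ext; apply: eq_bigr => g _; rewrite /gm /ext scaler_sumr.
by apply: eq_bigr => h _; rewrite malgUZ scalerA.
Qed.

Lemma gm_lin g : lin (gm g).
Proof. exact: ext_lin. Qed.

Lemma gmul_linl (v : KG) : lin (fun u => gmul u v).
Proof. by move=> c x y; rewrite !gmulE ext_lin. Qed.

Lemma gmul_linr (u : KG) : lin (gmul u).
Proof.
move=> c x y; rewrite !gmulE -ext_linF; apply: ext_ext => g.
exact: gm_lin.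
Qed.

Lemma gmU g (v : KG) : gmul << g >> v = gm g v.
Proof. by rewrite gmulE ext_U1. Qed.

Lemma gmul_assoc (u v w : KG) : gmul (gmul u v) w = gmul u (gmul v w).
Proof.
rewrite [gmul u v]gmulE (ext_comp _ _ (gmul_linl w)) [RHS]gmulE.
apply: ext_ext => g; rewrite {1}/gm (ext_comp _ _ (gmul_linl w)).
rewrite [gmul v w]gmulE (ext_comp _ _ (gm_lin g)); apply: ext_ext => h.
rewrite gmU {3}/gm (ext_comp _ _ (gm_lin g)); apply: ext_ext => l.
by rewrite /gm ext_U1 mulgA.
Qed.

Lemma gmul1 (u : KG) : gmul u (gone k G) = u.
Proof.
rewrite gmulE -[RHS]ext_id; apply: ext_ext => g.
by rewrite /gm /gone ext_U1 mulg1.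
Qed.

Lemma augm_incl (x : KG) d : (msupp x `<=` d)%fset -> augm x = \sum_(a <- d) x@_a.
Proof. by move=> hd; rewrite /augm (big_fset_incl _ hd) // => a _ /mcoeff_outdom. Qed.

Lemma augm_add c (x y : KG) : augm (c *: x + y) = c * augm x + augm y.
Proof.
have h1 : (msupp x `<=` msupp x `|` msupp y)%fset by apply: fsubsetUl.
have h2 : (msupp y `<=` msupp x `|` msupp y)%fset by apply: fsubsetUr.
have h3 : (msupp (c *: x + y) `<=` msupp x `|` msupp y)%fset.
  apply: fsubset_trans (msuppD_le _ _) _; apply: fsetSU; exact: msuppZ_le.
rewrite (augm_incl h1) (augm_incl h2) (augm_incl h3) mulr_sumr -big_split /=.
by apply: eq_bigr => a _; rewrite mcoeffD mcoeffZ.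
Qed.

Lemma augm0 : augm (0 : KG) = 0.
Proof. by rewrite /augm msupp0 big_seq_fset0. Qed.

Lemma augm_ext (F : G -> KG) (x : KG) : augm (ext F x) = \sum_(a <- msupp x) x@_a * augm (F a).
Proof.
rewrite /ext; have h : forall r : seq G, augm (\sum_(a <- r) x@_a *: F a) =
   \sum_(a <- r) x@_a * augm (F a).
  elim => [|a r IH]; first by rewrite !big_nil augm0.
  by rewrite !big_cons -IH augm_add.
exact: h.
Qed.

Lemma augmU g : augm (<< g >> : KG) = 1.
Proof. by rewrite /augm msuppU oner_eq0 big_seq_fset1 mcoeffUU. Qed.

Lemma augm_gm g (v : KG) : augm (gm g v) = augm v.
Proof. by rewrite augm_ext [augm v]/augm; apply: eq_bigr => h _; rewrite augmU mulr1. Qed.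

Lemma augm_mul (u v : KG) : augm (gmul u v) = augm u * augm v.
Proof.
rewrite gmulE augm_ext {2}/augm mulr_suml; apply: eq_bigr => g _.
by rewrite augm_gm.
Qed.

Lemma Ipow_sub n : subsp (@Ipow k G n).
Proof. case: n => [|n] /=; [by split | exact: span_sub]. Qed.

Lemma Ipow_rideal m (u v : KG) : Ipow m u -> Ipow m (gmul u v).
Proof.
case: m => [//|m] /= hu.
apply: (span_closed (Q := fun u => Defs.span _ (gmul u v))) hu.
  by apply: (subsp_preim (gmul_linl v)); apply: span_sub.
move=> z [u1 [w [hu1 [hw hz]]]]. rewrite hz. apply: span_gen.
exists u1, (gmul w v); split; first done; split; last by rewrite gmul_assoc.
by rewrite /augI augm_mul hw mul0r.
Qed.

Lemma Ipow_mul m n (u v : KG) : Ipow m u -> Ipow n v -> Ipow (m + n) (gmul u v).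
Proof.
elim: n u v => [|n IH] u v hu hv; first by rewrite addn0; apply: Ipow_rideal.
rewrite addnS /=.
apply: (span_closed (Q := fun v => Defs.span _ (gmul u v))) hv.
  by apply: (subsp_preim (gmul_linr u)); apply: span_sub.
move=> z [v1 [w [hv1 [hw hz]]]]; rewrite hz; apply: span_gen.
exists (gmul u v1), w; split; first exact: IH.
by split; last by rewrite gmul_assoc.
Qed.

End Grp.

Section Main.
Variables (G : groupType) (A : choiceType) (s t : A -> G)
    (lact : G -> A -> A) (ract : A -> G -> A).
Local Notation KG := {malg k[G]}.
Local Notation KA := {malg k[A]}.

Definition dd (a : A) : KG := << t a >> - << s a >>.

Lemma phiE (x : KA) : phi s t x = ext dd x.
Proof. by []. Qed.

Lemma phi_lin : lin (phi s t).
Proof. move=> c x y; rewrite !phiE; exact: ext_lin. Qed.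

Lemma gmul1l (v : KG) : gmul (gone k G) v = v.
Proof.
rewrite gmulE /gone ext_U1 /gm -[RHS]ext_id; apply: ext_ext => h.
by rewrite mul1g.
Qed.

Lemma phi_bimod (hQ : group_like_graph s t lact ract) (v1 v2 : KG) a :
  phi s t (bimod lact ract v1 << a >> v2) = gmul (gmul v1 (dd a)) v2.
Proof.
have [_ [_ [_ [_ [_ [hl hr]]]]]] := hQ.
have hb : bimod lact ract v1 << a >> v2 = \sum_(g <- msupp v1) \sum_(h <- msupp v2)
    << v1@_g * v2@_h *g ract (lact g a) h >>.
  rewrite /bimod; apply: eq_bigr => g _.
  by rewrite msuppU oner_eq0 big_seq_fset1 mcoeffUU mulr1.
rewrite hb (lin_sum _ _ phi_lin) [gmul v1 (dd a)]gmulE (ext_comp _ _ (gmul_linl v2)) /ext.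
apply: eq_bigr => g _; rewrite (lin_sum _ _ phi_lin).
rewrite /gm (linB (ext_lin _)) !ext_U1 (linB (gmul_linl v2)) !gmU /gm /ext.
rewrite -sumrB scaler_sumr; apply: eq_bigr => h _.
rewrite phiE ext_U /dd.
have [hs1 ht1] := hr (lact g a) h; have [hs2 ht2] := hl g a.
by rewrite -scalerBr scalerA hs1 ht1 hs2 ht2.
Qed.

Lemma augm_dd a : augI (dd a).
Proof.
by rewrite /augI /dd addrC -scaleN1r augm_add !augmU mulr1 addNr.
Qed.

Lemma Ipow1_dd a : Ipow 1 (dd a).
Proof.
apply: span_gen; exists (gone k G), (dd a); split; first done.
by split; [exact: augm_dd | rewrite gmul1l].
Qed.

Lemma conn g h : clos_refl_trans G (undirected_adj s t) g h ->
  exists y : KA, phi s t y = << h >> - << g >>.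
Proof.
elim => {g h}.
- move=> x y [a [[<- <-]|[<- <-]]].
    by exists << a >>; rewrite phiE ext_U1.
  by exists (- << a >>); rewrite -scaleN1r (linZ phi_lin) phiE ext_U1 scaleN1r opprB.
- by move=> x; exists 0; rewrite (lin0 phi_lin) subrr.
- move=> x y z _ [y1 h1] _ [y2 h2]; exists (y1 + y2).
  by rewrite (linD phi_lin) h1 h2 addrC addrA subrK.
Qed.

End Main.
End Gen.

Lemma main_aux (k : fieldType) (hk : [pchar k]%R =i pred0)
    (G : groupType) (A : choiceType) (s t : A -> G)
    (lact : G -> A -> A) (ract : A -> G -> A)
    (hQ : group_like_graph s t lact ract)
    (hconn : path_connected s t) :
  forall (n : nat) (w : {malg k[G]}),
    (exists x : {malg k[A]}, IpowA lact ract n x /\ phi s t x = w) <->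
    Ipow n.+1 w.
Proof.
move=> n w; split.
  move=> [x [hx <-]].
  apply: (span_closed (Q := fun x => Ipow n.+1 (phi s t x))) hx.
    by apply: (subsp_preim (phi_lin _ _)); exact: (Ipow_sub k G n.+1).
  move=> z [a [v1 [v2 [j [hj hv1 hv2 ->]]]]].
  rewrite phi_bimod //.
  have := Ipow_mul (Ipow_mul hv1 (Ipow1_dd k s t a)) hv2.
  by rewrite addn1 addSn subnKC.
pose S := fun w : {malg k[G]} => exists x : {malg k[A]}, IpowA lact ract n x /\ phi s t x = w.
have hIA : subsp (IpowA (k:=k) lact ract n) by apply: span_sub.
have hS : subsp S.
  case: hIA => hIA0 hIAc.
  split; first by exists 0; split; [exact: hIA0 | exact: (lin0 (phi_lin _ _))].
  move=> c x y [x1 [hx1 <-]] [y1 [hy1 <-]]; exists (c *: x1 + y1); split.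
    exact: hIAc.
  exact: (phi_lin _ _).
apply: (span_closed (Q := S)) => // z [u [v [hu [hv ->]]]].
have step1 : forall y : {malg k[A]}, S (gmul u (phi s t y)).
  move=> y; rewrite -[y]ext_id.
  apply: (ext_closed (Q := fun y : {malg k[A]} => S (gmul u (phi s t y)))) => [|a].
    by apply: (subsp_preim (Q := fun x => S (gmul u x)) (phi_lin _ _)); apply: (subsp_preim (Q := S) (gmul_linr u)).
  exists (bimod lact ract u << a >> (gone k G)); split.
    apply: span_gen; exists a, u, (gone k G), n; split => //; by rewrite subnn.
  by rewrite phi_bimod // gmul1 phiE ext_U1.
have hv' : v = ext (fun g => 1 *: << g >> + (fun _ => - << 1%g >>) g) v.
  rewrite ext_linF scale1r ext_id ext_const.
  by move: hv; rewrite /augI /augm => ->; rewrite scale0r addr0.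
rewrite hv' (ext_comp _ _ (gmul_linr u)); apply: ext_closed => // g.
have [y hy] := conn k (hconn 1%g g).
by rewrite scale1r -hy.
Qed.

Unset Implicit Arguments.
Local Close Scope ring_scope.

Theorem mainTheorem9 (k : fieldType) (hk : [pchar k]%R =i pred0)
    (G : groupType) (A : choiceType) (s t : A -> G)
    (lact : G -> A -> A) (ract : A -> G -> A)
    (hQ : group_like_graph s t lact ract)
    (hconn : path_connected s t) :
  forall (n : nat) (w : {malg k[G]}),
    (exists x : {malg k[A]}, IpowA lact ract n x /\ phi s t x = w) <->
    Ipow n.+1 w.
Proof. exact: (@main_aux k hk G A s t lact ract hQ hconn). Qed.
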